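(* Let $s\in\mathbb{R}^2$ with $|s|=1$, $m=s^\perp$, and let $F,G\in\mathcal{M}_s$ with $F=R(\mathbb{I}+\gamma s\otimes m)$, $G=Q(\mathbb{I}+\zeta s\otimes m)$, where $R,Q\in SO(2)$ and $\gamma,\zeta\in\mathbb{R}$. Then $\operatorname{rank}(F-G)=1$ if and only if one of the following holds: (i) $R=Q$ and $\gamma\neq\zeta$; or (ii) $R\neq Q$ and $\gamma-\zeta=2\tan(\theta/2)$, where $\theta\in(-\pi,\pi)$ is the rotation angle of $Q^TR$, i.e. $Q^TRe_1=\cos\theta\, e_1+\sin\theta\, e_2$. Moreover, in case (i), $F-G=(\gamma-\zeta)Rs\otimes m$, and in case (ii), $$F-G=\frac{\gamma-\zeta}{4+(\gamma-\zeta)^2}\,Q\big((\zeta-\gamma)s+2m\big)\otimes\big(2s+(\gamma+\zeta)m\big).$$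
   Context: $m=s^\perp=(-s_2,s_1)$; $\mathcal{M}_s=\{F\in\mathbb{R}^{2\times2}:\det F=1,|Fs|=1\}=\{R(\mathbb{I}+\gamma s\otimes m):R\in SO(2),\gamma\in\mathbb{R}\}$; $a\otimes b=ab^T$. *)

(* Defs.v *)
From HB Require Import structures.
From mathcomp Require Import all_boot all_order all_algebra.
From mathcomp Require Import reals trigo.
Set Implicit Arguments. Unset Strict Implicit. Unset Printing Implicit Defensive.
Import Order.TTheory GRing.Theory Num.Theory.
Local Open Scope ring_scope.

Definition vec2 {R : ringType} (x y : R) : 'cV[R]_2 :=
  \col_(i < 2) (if i == 0 then x else y).

Definition perp {R : ringType} (s : 'cV[R]_2) : 'cV[R]_2 :=
  vec2 (- s 1 0) (s 0 0).

Definition tens {R : ringType} (a b : 'cV[R]_2) : 'M[R]_2 := a *m b^T.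

Definition e1 {R : ringType} : 'cV[R]_2 := vec2 1 0.
Definition e2 {R : ringType} : 'cV[R]_2 := vec2 0 1.

Definition unit_vec {R : ringType} (s : 'cV[R]_2) : Prop :=
  s 0 0 ^+ 2 + s 1 0 ^+ 2 = 1.

Definition SO2 {R : comUnitRingType} (Q : 'M[R]_2) : Prop :=
  Q^T *m Q = 1%:M /\ \det Q = 1.

(* Main.v *)
Require Import Defs.
From HB Require Import structures.
From mathcomp Require Import all_boot all_order all_algebra.
From mathcomp Require Import reals trigo.
From mathcomp Require Import ring lra.
Import Order.TTheory GRing.Theory Num.Theory.
Local Open Scope ring_scope.

Definition mx2 {R : comNzRingType} (a b c d : R) : 'M[R]_2 :=
  \matrix_(i < 2, j < 2) if i == 0 then (if j == 0 then a else b) else (if j == 0 then c else d).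

Ltac mxt := apply/matrixP => [[[|[|?]]] ?] [[|[|?]] ?] //;
  rewrite !(mxE, big_ord_recr, big_ord0) /=.

Lemma mx2_eta {R : comNzRingType} (M : 'M[R]_2) : M = mx2 (M 0 0) (M 0 1) (M 1 0) (M 1 1).
Proof. mxt. all: congr (M _ _); exact: val_inj. Qed.

Lemma vec2_eta {R : comNzRingType} (v : 'cV[R]_2) : v = vec2 (v 0 0) (v 1 0).
Proof. apply/matrixP => i j; case: i => [[|[|i]]] Hi //; rewrite (ord1 j) !mxE /=; congr (v _ _); exact: val_inj. Qed.

Lemma det_mx2 {R : comNzRingType} (a b c d : R) : \det (mx2 a b c d) = a * d - b * c.
Proof.
rewrite (expand_det_row _ 0) !big_ord_recr big_ord0 /= /cofactor !det_mx11 !mxE /=.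
by rewrite add0n expr0 add0n expr1; ring.
Qed.

Lemma mx2_inj {R : comNzRingType} (a b c d a' b' c' d' : R) :
  mx2 a b c d = mx2 a' b' c' d' -> [/\ a = a', b = b', c = c' & d = d'].
Proof.
move/matrixP => h; split.
- by have := h 0 0; rewrite !mxE.
- by have := h 0 1; rewrite !mxE.
- by have := h 1 0; rewrite !mxE.
- by have := h 1 1; rewrite !mxE.
Qed.

Lemma mx2_0 {R : comNzRingType} : mx2 0 0 0 0 = 0 :> 'M[R]_2.
Proof. by mxt. Qed.

Lemma vec2_inj {R : comNzRingType} (a b a' b' : R) : vec2 a b = vec2 a' b' -> a = a' /\ b = b'.
Proof.
move/matrixP => h; split.
- by have := h 0 0; rewrite !mxE.
- by have := h 1 0; rewrite !mxE.
Qed.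

Lemma SO2E {R : realType} (Q : 'M[R]_2) : SO2 Q ->
  Q = mx2 (Q 0 0) (- Q 1 0) (Q 1 0) (Q 0 0) /\ Q 0 0 ^+ 2 + Q 1 0 ^+ 2 = 1.
Proof.
case=> HT Hd.
have E := mx2_eta Q.
move: HT Hd; rewrite E det_mx2.
move: (Q 0 0) (Q 0 1) (Q 1 0) (Q 1 1) => p b q d HT Hd.
have : (p ^+ 2 + q ^+ 2 = 1) /\ (b ^+ 2 + d ^+ 2 = 1) /\ (p * b + q * d = 0).
  move/matrixP: HT => h.
  have h00 := h 0 0; have h11 := h 1 1; have h01 := h 0 1.
  move: h00 h11 h01; rewrite !(mxE, big_ord_recr, big_ord0) /=.
  move=> h00 h11 h01; split; [|split]; nra.
case=> h1 [h2 h3].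
have hs : (b + q) ^+ 2 + (d - p) ^+ 2 = 0.
  have -> : (b + q) ^+ 2 + (d - p) ^+ 2 = (b ^+ 2 + d ^+ 2) + (p ^+ 2 + q ^+ 2) - 2 * (p * d - b * q) by ring.
  by rewrite h1 h2 Hd; ring.
move/eqP: hs; rewrite paddr_eq0 ?sqr_ge0 // !sqrf_eq0 => /andP [/eqP hb /eqP hd].
have {hb} hb : b = - q by rewrite -[b]subr0 -hb; ring.
have {hd} hd : d = p by rewrite -[d]subr0 -hd; ring.
by rewrite !mxE /= hb hd.
Qed.

Lemma rank1_2 {R : realType} (D : 'M[R]_2) : \rank D = 1%N <-> (D != 0 /\ \det D = 0).
Proof.
split.
- move=> h; split.
  + apply/eqP => D0; move: h; rewrite D0 mxrank0 //.
  + apply/eqP; apply: contraT => hd.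
    have : D \in unitmx by rewrite unitmxE unitfE.
    by move/mxrank_unit; rewrite h.
- case=> hD hdet.
  have h2 : (\rank D <= 2)%N := rank_leq_row D.
  have h0 : \rank D != 0%N by rewrite mxrank_eq0.
  have hn2 : \rank D != 2%N.
    apply/negP => /eqP e.
    have : row_free D by rewrite /row_free e.
    by rewrite row_free_unit unitmxE unitfE hdet eqxx.
  move: h2 h0 hn2; case: (\rank D) => [|[|[|]]] //.
Qed.
Lemma by_lc (R : realType) (L Rr k u : R) : u = 1 -> L - Rr = k * (u - 1) -> L = Rr.
Proof. by move=> -> /eqP; rewrite subrr mulr0 subr_eq0 => /eqP. Qed.

Lemma half_facts (R : realType) (th : R) : - pi < th -> th < pi ->
  [/\ 0 < cos (th / 2), cos th = cos (th/2) ^+ 2 - sin (th/2) ^+ 2,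
      sin th = 2 * sin (th/2) * cos (th/2), tan (th / 2) = sin (th/2) / cos (th/2)
    & sin (th/2) ^+ 2 + cos (th/2) ^+ 2 = 1].
Proof.
move=> h1 h2.
have Eth : th = th / 2 + th / 2 by field.
split.
- apply: cos_gt0_pihalf; apply/andP; split; lra.
- by rewrite {1}Eth cosD -!expr2.
- rewrite {1}Eth sinD; ring.
- by [].
- by rewrite addrC cos2Dsin2.
Qed.

Lemma core_dir1 (R : realType) (x y d : R) : x ^+ 2 + y ^+ 2 = 1 -> ~ (x = 1 /\ y = 0) ->
  2 - 2 * x - d * y = 0 ->
  exists th : R, [/\ - pi < th, th < pi, cos th = x, sin th = y & d = 2 * tan (th / 2)].
Proof.
move=> hxy hne hdet.
have xn1 : x != -1.
  apply/eqP => hx; subst x.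
  have : y ^+ 2 = 0 by lra.
  move/eqP; rewrite sqrf_eq0 => /eqP hy; subst y; lra.
have x1 : 0 < 1 + x.
  have : x ^+ 2 <= 1 by have := sqr_ge0 y; lra.
  move=> hx2. have : -1 <= x by nra.
  move: xn1; rewrite eq_sym; move=> /negPf xn1. rewrite le_eqVlt => /orP [/eqP hx|]; last lra.
  by move: xn1; rewrite hx eqxx.
have yn0 : y != 0.
  apply/eqP => hy; subst y; apply: hne; split => //.
  have : (x - 1) * (x + 1) = 0 by lra.
  move/eqP; rewrite mulf_eq0 => /orP [/eqP|/eqP]; lra.
have hd : d * (1 + x) = 2 * y.
  apply: (mulIf yn0).
  have : d * y = 2 - 2 * x by lra.
  move=> e. rewrite -mulrA (mulrC _ y) mulrA e. nra.
pose t := y / (1 + x).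
pose h := atan t.
have [hr ht] := atan_def t.
rewrite -/h in hr ht.
have Cpos : 0 < cos h by apply: cos_gt0_pihalf.
have Cn0 : cos h != 0 by rewrite gt_eqF.
have St : sin h = t * cos h by rewrite -ht /tan mulfVK.
have C2 : cos h ^+ 2 * (1 + t ^+ 2) = 1.
  by rewrite mulrDr mulr1 -exprMn (mulrC _ t) -St addrC sin2cos2 subrK.
have x1n : 1 + x != 0 by rewrite gt_eqF.
have e : 1 + t ^+ 2 = 2 / (1 + x).
  apply: (@by_lc _ _ _ ((1 + x) ^- 2) _ hxy); rewrite /t; field; done.
have C2' : cos h ^+ 2 = (1 + x) / 2.
  rewrite e in C2.
  have : cos h ^+ 2 = (1 + x) / 2 * (cos h ^+ 2 * (2 / (1 + x))) by field.
  by rewrite C2 mulr1.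
exists (2 * h); split.
- case/andP: hr => ? ?; lra.
- case/andP: hr => ? ?; lra.
- have -> : 2 * h = h + h by ring.
  rewrite cosD St.
  have -> : cos h * cos h - t * cos h * (t * cos h) = cos h ^+ 2 * (1 - t ^+ 2) by ring.
  rewrite C2' /t.
  apply: (@by_lc _ _ _ (- (2 * (1 + x))^-1) _ hxy); field; done.
- have -> : 2 * h = h + h by ring.
  rewrite sinD St.
  have -> : t * cos h * cos h + cos h * (t * cos h) = 2 * t * cos h ^+ 2 by ring.
  rewrite C2' /t; field; done.
- have -> : 2 * h / 2 = h by field.
  rewrite ht /t. apply: (mulIf x1n). rewrite hd; field; done.
Qed.

Lemma core_dir2 (R : realType) (x y d th : R) : - pi < th -> th < pi -> cos th = x -> sin th = y ->
  d = 2 * tan (th / 2) -> 2 - 2 * x - d * y = 0.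
Proof.
move=> h1 h2 <- <- ->.
have [Cp -> -> -> u] := @half_facts _ _ h1 h2.
have Cn0 : cos (th/2) != 0 by rewrite gt_eqF.
apply: (@by_lc _ _ _ (-2) _ u); field; done.
Qed.

Lemma K_formula (R : realType) (g z th : R) : - pi < th -> th < pi ->
  g - z = 2 * tan (th / 2) ->
  [/\ cos th - 1 = (g - z) / (4 + (g - z) ^+ 2) * ((z - g) * 2),
      g * cos th - sin th - z = (g - z) / (4 + (g - z) ^+ 2) * ((z - g) * (g + z)),
      sin th = (g - z) / (4 + (g - z) ^+ 2) * (2 * 2)
    & g * sin th + cos th - 1 = (g - z) / (4 + (g - z) ^+ 2) * (2 * (g + z))].
Proof.
move=> h1 h2 hd.
set x := cos th; set y := sin th; set c := (g - z) / (4 + (g - z) ^+ 2).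
have [Cp Ex Ey Et u] := @half_facts _ _ h1 h2.
have Cn0 : cos (th/2) != 0 by rewrite gt_eqF.
set S := sin (th/2) in Ex Ey Et u *; set C := cos (th/2) in Cp Ex Ey Et u Cn0 *.
rewrite Et in hd.
have e4 : 4 + (g - z) ^+ 2 = 4 / C ^+ 2.
  rewrite hd; apply: (@by_lc _ _ _ (4 / C ^+ 2) _ u); field; done.
have ec : c = S * C / 2 by rewrite /c e4 hd; field.
have eg : g = z + 2 * (S / C) by rewrite -hd; ring.
rewrite /x /y ec Ex Ey; split.
- apply: (@by_lc R _ _ (1:R) _ u); rewrite eg; field; done.
- apply: (@by_lc _ _ _ z _ u); rewrite eg; field; done.
- by field.
- apply: (@by_lc R _ _ (1:R) _ u); rewrite eg; field; done.
Qed.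

Ltac vxt := apply/matrixP => [[[|[|?]]] ?] [[|?] ?] //;
  rewrite !(mxE, big_ord_recr, big_ord0) /=.

Theorem lemma3p1 (R : realType) (s : 'cV[R]_2) (Rm Q : 'M[R]_2) (g z : R) :
  unit_vec s -> SO2 Rm -> SO2 Q ->
  let m := perp s in
  let F := Rm  *m (1%:M + g *: tens s m) in
  let G := Q  *m (1%:M + z *: tens s m) in
  ((\rank (F - G) = 1%N) <->
     ((Rm = Q /\ g != z) \/
      (Rm != Q /\ exists theta : R,
          [/\ - pi < theta, theta < pi,
              Q^T  *m Rm  *m e1 = cos theta *: e1 + sin theta *: e2
            & g - z = 2 * tan (theta / 2)])))
  /\ (Rm = Q -> g != z -> F - G = (g - z) *: tens (Rm  *m s) m)
  /\ (forall theta : R, Rm != Q -> - pi < theta -> theta < pi ->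
        Q^T  *m Rm  *m e1 = cos theta *: e1 + sin theta *: e2 ->
        g - z = 2 * tan (theta / 2) ->
        F - G = ((g - z) / (4 + (g - z) ^+ 2))  *:
                  tens (Q  *m ((z - g) *: s + 2 *: m)) (2 *: s + (g + z) *: m)).
Proof.
move=> us HR HQ; cbv zeta.
have [ER uR] := SO2E _ HR; have [EQ uQ] := SO2E _ HQ.
have Es := vec2_eta s.
move: us; rewrite /unit_vec => us.
clear HR HQ.
move: (Rm 0 0) (Rm 1 0) ER uR => p q ER uR.
move: (Q 0 0) (Q 1 0) EQ uQ => pp qq EQ uQ.
move: (s 0 0) (s 1 0) Es us => a b Es us.
subst Rm Q s.
set D := (_ - _ : 'M[R]_2).
have E0 : (pp ^+ 2 + qq ^+ 2) *: D = mx2 pp (- qq) qq pp  *m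
   (mx2 a (-b) b a  *m mx2 ((pp * p + qq * q) - (pp ^+ 2 + qq ^+ 2))
        (g * (pp * p + qq * q) - (pp * q - qq * p) - (pp ^+ 2 + qq ^+ 2) * z)
        (pp * q - qq * p) (g * (pp * q - qq * p) + (pp * p + qq * q) - (pp ^+ 2 + qq ^+ 2))
      *m (mx2 a (-b) b a)^T
   + (1 - (a ^+ 2 + b ^+ 2)) *: (mx2 (pp * p + qq * q) (- (pp * q - qq * p)) (pp * q - qq * p) (pp * p + qq * q)
        - (pp ^+ 2 + qq ^+ 2) *: 1%:M)).
  rewrite /D /tens /perp; mxt; ring.
rewrite uQ us subrr scale0r addr0 scale1r ?mulr1 in E0.
set x := pp * p + qq * q in E0 *.
set y := pp * q - qq * p in E0 *.
set Qm := mx2 pp (- qq) qq pp in E0 *.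
set Rmm := mx2 p (- q) q p.
set B := mx2 a (- b) b a in E0.
set K := mx2 _ _ _ _ in E0.
have hxy : x ^+ 2 + y ^+ 2 = 1.
  have -> : x ^+ 2 + y ^+ 2 = (pp ^+ 2 + qq ^+ 2) * (p ^+ 2 + q ^+ 2) by rewrite /x /y; ring.
  by rewrite uQ uR mulr1.
have hRQ : Rmm = Qm <-> (x = 1 /\ y = 0).
  split.
  - move/mx2_inj => [e1' e2' _ _]; have e2'' : q = qq by rewrite -[q]opprK e2' opprK.
    rewrite /x /y -e1' -e2''; split; [rewrite -uR|]; ring.
  - case=> x1 y0.
    have hs : (p - pp) ^+ 2 + (q - qq) ^+ 2 = 0.
      have -> : (p - pp) ^+ 2 + (q - qq) ^+ 2 = (p ^+ 2 + q ^+ 2) + (pp ^+ 2 + qq ^+ 2) - 2 * x by rewrite /x; ring.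
      by rewrite uR uQ x1; ring.
    move/eqP: hs; rewrite paddr_eq0 ?sqr_ge0 // !sqrf_eq0 => /andP [/eqP h1 /eqP h2].
    rewrite /Rmm /Qm; have -> : p = pp by rewrite -[p]subr0 -h1; ring.
    by have -> : q = qq by rewrite -[q]subr0 -h2; ring.
have dQ : \det Qm = 1 by rewrite det_mx2 -uQ; ring.
have dB : \det B = 1 by rewrite det_mx2 -us; ring.
have QtQ : Qm^T *m Qm = 1%:M.
  rewrite /Qm; mxt; nra.
have BtB : B^T *m B = 1%:M by rewrite /B; mxt; nra.
have key : \rank D = 1%N <-> (~ (x = 1 /\ y = 0 /\ g = z) /\ 2 - 2 * x - (g - z) * y = 0).
  rewrite rank1_2.
  have dD : \det D = 2 - 2 * x - (g - z) * y.
    rewrite E0 !detM det_tr dQ dB /K det_mx2.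
    apply: (@by_lc R _ _ 1 _ hxy); ring.
  have D0 : D = 0 <-> (x = 1 /\ y = 0 /\ g = z).
    split.
    - move=> hD.
      have : B^T *m Qm^T *m D *m B = K.
        rewrite E0 !mulmxA -(mulmxA B^T) QtQ mulmx1 BtB mul1mx -mulmxA BtB mulmx1 //.
      rewrite hD mulmx0 mul0mx /K -mx2_0 => /mx2_inj [h1 h2 h3 h4].
      have x1 : x = 1 by rewrite -[x]subr0 h1; ring.
      have y0 : y = 0 by rewrite h3.
      split => //; split => //.
      by rewrite -[g]subr0 h2 x1 y0; ring.
    - case=> x1 [y0 gz].
      rewrite E0 /K x1 y0 gz.
      have -> : mx2 (1 - 1) (z * 1 - 0 - 1 * z) 0 (z * 0 + 1 - 1) = 0 :> 'M[R]_2.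
        by rewrite -mx2_0; congr mx2; ring.
      by rewrite mulmx0 mul0mx mulmx0.
  rewrite dD; split.
  - case=> hD hd; split => // h; move/eqP: hD; apply; exact/D0.
  - case=> hn hd; split => //; apply/eqP => h; apply: hn; exact/D0.
have Pe1 : Qm^T *m Rmm *m e1 = vec2 x y by rewrite /Qm /Rmm /e1 /x /y; vxt; ring.
have Ve : forall th : R, cos th *: e1 + sin th *: e2 = vec2 (cos th) (sin th).
  by move=> th; rewrite /e1 /e2; vxt; ring.
split; [|split].
- rewrite key; split.
  + case=> hn hd. have [eRQ|nRQ] := eqVneq Rmm Qm.
    * left; split => //. apply/eqP => gz; apply: hn. by have [x1 y0] := hRQ.1 eRQ.
    * right; split => //.
      have nxy : ~ (x = 1 /\ y = 0) by move=> h; move/eqP: nRQ; apply; exact/hRQ.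
      have [th [h1 h2 hc hs hdd]] := @core_dir1 _ _ _ _ hxy nxy hd.
      exists th; split => //. by rewrite Pe1 Ve hc hs.
  + case=> [[eRQ gz]|[nRQ [th [h1 h2 hv hdd]]]].
    * have [x1 y0] := hRQ.1 eRQ. split.
        by move=> [_ [_ gz']]; move/eqP: gz.
      rewrite x1 y0; ring.
    * move: hv; rewrite Pe1 Ve => /vec2_inj [hc hs]. split.
        by move=> [x1 [y0 _]]; move/eqP: nRQ; apply; exact/hRQ.
      exact: (@core_dir2 _ _ _ _ _ h1 h2 (esym hc) (esym hs) hdd).
- move=> eRQ gz. move/mx2_inj: eRQ => [e1' e2' _ _].
  have e2'' : q = qq by rewrite -[q]opprK e2' opprK.
  rewrite /D /Rmm -e1' -e2'' /tens /perp; mxt; ring.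
- move=> th nRQ h1 h2 hv hdd. move: hv; rewrite Pe1 Ve => /vec2_inj [hc hs].
  have [k1 k2 k3 k4] := @K_formula _ _ _ _ h1 h2 hdd.
  set c := (g - z) / (4 + (g - z) ^+ 2) in k1 k2 k3 k4 *.
  have EK : K = c *: mx2 ((z - g) * 2) ((z - g) * (g + z)) (2 * 2) (2 * (g + z)).
    rewrite /K hc hs; mxt; rewrite ?mul1r; [exact k1|exact k2|exact k3|exact k4].
  rewrite E0 EK /Qm /B /tens /perp; mxt; ring.
Qed.
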